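(* In any quiver, normality is anti-hereditary: if $B$ is a normal vertex and $A$ is an ancestor of $B$, then $A$ is normal.
   Context: A quiver consists of a class of vertices and, for each ordered pair of vertices $(A,B)$, a set of edges $A\to B$ (loops and multiple edges allowed). An evolution of length $m\ge 0$ is a sequence $A_0\leftarrow A_1\leftarrow\cdots\leftarrow A_m$ of vertices together with edges $A_k\to A_{k-1}$ ($1\le k\le m$); $A_0$ is its initial and $A_m$ its terminal vertex. Write $A\le B$ ($A$ is an ancestor of $B$) if there is an evolution with initial vertex $A$ and terminal vertex $B$; $A,B$ are isotypic if $A\le B$ and $B\le A$. A vertex $A$ is primitive if every ancestor of $A$ is isotypic to $A$. A full evolution for $X$ is an evolution with primitive initial vertex and terminal vertex $X$. The height $h(X)$ is the smallest length of a full evolution for $X$ ($\infty$ if none). A vertex $A_k$ ($0\le k<m$) of an evolution $A_0\leftarrow\cdots\leftarrow A_m$ is critical if $h(A_k)<\infty$ and $h(A_{k+1})=h(A_k)+1$. The critical ancestors of a vertex $B$ are the critical vertices of full evolutions terminating at $B$. $B$ is normal if any two critical ancestors of $B$ of equal height are isotypic. *)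

(* Defs.v *)
From Stdlib Require Import Arith.
Set Implicit Arguments.

Section Quiver.
Variable V : Type.
Variable E : V -> V -> Type.

Record evolution := Evolution {
  len : nat;
  vtx : nat -> V;
  edg : forall k, k < len -> E (vtx (S k)) (vtx k)
}.

Definition initial (ev : evolution) : V := vtx ev 0.
Definition terminal (ev : evolution) : V := vtx ev (len ev).

Definition ancestor (A B : V) : Prop :=
  exists ev : evolution, initial ev = A /\ terminal ev = B.

Definition isotypic (A B : V) : Prop := ancestor A B /\ ancestor B A.

Definition primitive (A : V) : Prop := forall C, ancestor C A -> isotypic C A.

Definition full_evolution_for (X : V) (ev : evolution) : Prop :=
  primitive (initial ev) /\ terminal ev = X.

Definition has_full_evol_of_len (X : V) (n : nat) : Prop :=
  exists ev, full_evolution_for X ev /\ len ev = n.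

Definition height_is (X : V) (n : nat) : Prop :=
  has_full_evol_of_len X n /\ forall m, has_full_evol_of_len X m -> n <= m.

Definition critical_at (ev : evolution) (k : nat) : Prop :=
  k < len ev /\
  exists n, height_is (vtx ev k) n /\ height_is (vtx ev (S k)) (S n).

Definition critical_ancestor (C B : V) : Prop :=
  exists ev k, full_evolution_for B ev /\ critical_at ev k /\ vtx ev k = C.

Definition normal (B : V) : Prop :=
  forall C D n, critical_ancestor C B -> critical_ancestor D B ->
    height_is C n -> height_is D n -> isotypic C D.

End Quiver.

(* Main.v *)
Require Import Defs.
From Stdlib Require Import Arith Lia.

Section S.
Variable V : Type.
Variable E : V -> V -> Type.

Definition cvtx (ev1 ev2 : evolution E) (i : nat) : V :=
  if i <=? len ev1 then vtx ev1 i else vtx ev2 (i - len ev1).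

Lemma cedg (ev1 ev2 : evolution E) (H : terminal ev1 = initial ev2) :
  forall k, k < len ev1 + len ev2 -> E (cvtx ev1 ev2 (S k)) (cvtx ev1 ev2 k).
Proof.
  intros k Hk. unfold cvtx.
  destruct (le_lt_dec (S k) (len ev1)) as [l|l].
  - rewrite (proj2 (Nat.leb_le _ _) l).
    rewrite (proj2 (Nat.leb_le k (len ev1)) ltac:(lia)).
    exact (edg ev1 l).
  - rewrite (proj2 (Nat.leb_gt _ _) l).
    assert (Hs : S k - len ev1 = S (k - len ev1)) by lia. rewrite Hs.
    assert (Hk2 : k - len ev1 < len ev2) by lia.
    destruct (Nat.eq_dec k (len ev1)) as [e|n].
    + rewrite (proj2 (Nat.leb_le k (len ev1)) ltac:(lia)).
      assert (Hv : vtx ev1 k = vtx ev2 (k - len ev1)).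
      { rewrite e, Nat.sub_diag. exact H. }
      rewrite Hv. exact (edg ev2 Hk2).
    + rewrite (proj2 (Nat.leb_gt k (len ev1)) ltac:(lia)).
      exact (edg ev2 Hk2).
Qed.

Definition concat (ev1 ev2 : evolution E) (H : terminal ev1 = initial ev2) : evolution E :=
  @Evolution V E (len ev1 + len ev2) (cvtx ev1 ev2) (@cedg ev1 ev2 H).

End S.

Theorem lemma4p1 (V : Type) (E : V -> V -> Type) (A B : V) :
  normal E B -> ancestor E A B -> normal E A.
Proof.
  intros HB [ev2 [Hi2 Ht2]].
  assert (Hlift : forall C, critical_ancestor E C A -> critical_ancestor E C B).
  { intros C [ev [k [[Hp Ht] [[Hk Hc] Hv]]]].
    assert (H : terminal ev = initial ev2) by congruence.
    exists (@concat V E ev ev2 H), k. simpl. split; [split|split; [split|]].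
    - unfold initial in *; simpl. unfold cvtx. simpl. exact Hp.
    - unfold terminal; simpl. unfold cvtx.
      destruct (Nat.leb_spec (len ev + len ev2) (len ev)).
      + assert (len ev2 = 0) by lia.
        replace (len ev + len ev2) with (len ev) by lia.
        rewrite <- Ht2. unfold terminal. rewrite H1.
        fold (terminal ev). rewrite H. reflexivity.
      + rewrite <- Ht2. unfold terminal. f_equal. lia.
    - simpl. lia.
    - unfold cvtx. simpl.
      unfold cvtx. rewrite (proj2 (Nat.leb_le k (len ev)) ltac:(lia)), (proj2 (Nat.leb_le (S k) (len ev)) ltac:(lia)).
      exact Hc.
    - simpl. unfold cvtx.
      rewrite (proj2 (Nat.leb_le k (len ev)) ltac:(lia)). exact Hv. }
  intros C D n HC HD. apply HB; auto.
Qed.
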